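(* Let $X_1,X_2,\dots$ be i.i.d. $\mathbb{Z}$-valued random variables and $S_n=\sum_{j=1}^nX_j$. For every $N\in\mathbb{N}\setminus\{1\}$, $$\frac{1}{1+\sum_{i=1}^{N-1}P\{S_i\in[0]_N\}}\le\mathbb{P}^{(N)}_{\mathcal{R}}\Big(\bigcup_{n=1}^N\{\mathcal{R}^{(N)}_n=0\}\Big)\le\frac{2}{1+\sum_{i=1}^{N-1}P\{S_i\in[0]_N\}}.$$
   Context: $X_j$ live on $(\Omega,\mathcal{F},P)$. $[y]_N=\{y+kN:k\in\mathbb{Z}\}$. For $N\in\mathbb{N}$, $X^{(N)}_0$ is uniform on $\{0,\dots,N-1\}$ under $(\Omega_N,\mathcal{F}_N,\mu_N)$; $(b\bmod N)$ is the remainder of $b\in\mathbb{Z}$ divided by $N$; $\mathcal{R}^{(N)}_n=(X^{(N)}_0+S_n\bmod N)$; $\mathbb{P}^{(N)}_{\mathcal{R}}=\mu_N\times P$. *)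

(* Defs.v *)
From HB Require Import structures.
From mathcomp Require Import all_boot all_order all_algebra.
From mathcomp Require Import all_classical all_reals all_analysis.
Set Implicit Arguments. Unset Strict Implicit. Unset Printing Implicit Defensive.
Import Order.TTheory GRing.Theory Num.Theory.
Local Open Scope classical_set_scope.
Local Open Scope ring_scope.

Section Defs.
Context {d : measure_display} {T : measurableType d} {R : realType}.

(* X : nat -> T -> int, with X_1, X_2, ... the relevant ones (index 0 unused). *)

Definition int_rvs (X : nat -> T -> int) : Prop :=
  forall j (k : int), (0 < j)%N -> measurable (X j @^-1` [set k]).

Definition ident_distr (P : probability T R) (X : nat -> T -> int) : Prop :=
  forall j (k : int), (0 < j)%N -> P (X j @^-1` [set k]) = P (X 1%N @^-1` [set k]).

Definition mutually_indep (P : probability T R) (X : nat -> T -> int) : Prop :=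
  forall (J : seq nat) (k : nat -> int), uniq J -> all (fun j => 0 < j)%N J ->
    P [set w | forall j, j \in J -> X j w = k j]
    = (\prod_(j <- J) P (X j @^-1` [set k j]))%E.

Definition iid (P : probability T R) (X : nat -> T -> int) : Prop :=
  [/\ int_rvs X, ident_distr P X & mutually_indep P X].

Definition S (X : nat -> T -> int) (n : nat) (w : T) : int :=
  \sum_(1 <= j < n.+1) X j w.

Definition cls (y : int) (N : nat) : set int :=
  [set z | exists k : int, z = y + k * N%:Z].

(* R^{(N)}_n = (X^{(N)}_0 + S_n mod N), on Omega_N x Omega with
   Omega_N = nat and X^{(N)}_0 the first coordinate *)
Definition Rw (X : nat -> T -> int) (N n : nat) (xw : nat * T) : int :=
  ((xw.1%:Z + S X n xw.2) %% N%:Z)%Z.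

(* P^{(N)}_R = mu_N x P, with mu_N uniform on {0,...,N-1}:
   (mu_N x P)(A) = (1/N) sum_{x<N} P(A_x)  (A_x the section at x). *)
Definition PR (P : probability T R) (N : nat) (A : set (nat * T)) : R :=
  N%:R^-1 * \sum_(x < N) fine (P [set w | A (nat_of_ord x, w)]).

End Defs.

(* Main.v *)
Require Import Defs.
From HB Require Import structures.
From mathcomp Require Import all_boot all_order all_algebra.
From mathcomp Require Import all_classical all_reals all_analysis.
From mathcomp Require Import zify ring lra.
Import Order.TTheory GRing.Theory Num.Theory.
Local Open Scope classical_set_scope.
Local Open Scope ring_scope.

Definition cz (A : set int) (n : nat) : set int := [set z | pickle z = n /\ A z].

Lemma cz_cases A n : cz A n = set0 \/ exists z, pickle z = n /\ A z /\ cz A n = [set z].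
Proof.
case E: (@pickle_inv int n) => [z|].
- have pz : pickle z = n by move: (@pickle_invK int n); rewrite E.
  case: (pselect (A z)) => Az.
  + right; exists z; split => //; split => //; apply/seteqP; split => y /=.
      by case => py _; apply: (pcan_inj pickleK_inv); rewrite py pz.
    by move=> ->.
  + left; apply/seteqP; split => y //= [py Ay]; apply: Az.
    have : pickle y = pickle z by rewrite py pz.
    by move/(pcan_inj pickleK_inv) => <-.
- left; apply/seteqP; split => y //= [py _].
  by move: E; rewrite -py pickleK_inv.
Qed.

Lemma cz_trivI A : trivIset setT (cz A).
Proof. by move=> i j _ _ [z [[pi _] [pj _]]]; rewrite -pi -pj. Qed.

Lemma cz_cover A : A = \bigcup_n cz A n.
Proof.
apply/seteqP; split => z /=; first by move=> Az; exists (pickle z) => //.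
by case=> n _ [].
Qed.

Section Prob.
Context (d : measure_display) (T : measurableType d) (R : realType)
  (P : probability T R) (X : nat -> T -> int).
Hypothesis (Xm : int_rvs X) (Xid : ident_distr P X) (Xind : mutually_indep P X).

Lemma measX j A : (0 < j)%N -> measurable (X j @^-1` A).
Proof.
move=> j0; rewrite (cz_cover A) preimage_bigcup; apply: bigcupT_measurable => n.
case: (cz_cases A n) => [->|[z [_ [_ ->]]]]; first by rewrite preimage_set0.
exact: Xm.
Qed.


Local Open Scope ereal_scope.

Lemma Pfin A : measurable A -> P A \is a fin_num.
Proof.
move=> mA; rewrite ge0_fin_numE ?measure_ge0//.
by apply: (le_lt_trans (probability_le1 P mA)); rewrite ltry.
Qed.

Lemma decomp G l A : measurable G -> (0 < l)%N ->
  P (G `&` X l @^-1` A) = \sum_(0 <= n <oo) P (G `&` X l @^-1` cz A n).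
Proof.
move=> mG l0; rewrite {1}(cz_cover A) preimage_bigcup setI_bigcupr.
apply/esym/cvg_lim => //; apply: measure_sigma_additive.
  by move=> n; apply: measurableI => //; exact: measX.
by move=> i j _ _ [w [[_ [pi1 _]] [_ [pj1 _]]]]; rewrite -pi1 -pj1.
Qed.

Lemma measAll (L : seq nat) (B : nat -> set int) : all (fun j => 0 < j)%N L ->
  measurable [set w | forall j, j \in L -> B j (X j w)].
Proof.
elim: L => [|l L IH] /=.
  by move=> _; rewrite [X in measurable X](_ : _ = setT) //; apply/seteqP; split.
case/andP => l0 /IH mL.
rewrite [X in measurable X](_ : _ = X l @^-1` B l `&` [set w | forall j, j \in L -> B j (X j w)]).
  by apply: measurableI => //; exact: measX.
apply/seteqP; split => w /=.
  by move=> H; split; [apply: H; rewrite mem_head | move=> j jL; apply: H; rewrite in_cons jL orbT].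
by case=> Hl HL j; rewrite in_cons => /orP[/eqP ->|/HL].
Qed.


Lemma indep_sets (L J : seq nat) (A : nat -> set int) (k : nat -> int) :
  uniq (L ++ J) -> all (fun j => 0 < j)%N (L ++ J) ->
  P [set w | (forall j, j \in L -> A j (X j w)) /\ (forall j, j \in J -> X j w = k j)]
  = \prod_(j <- L) P (X j @^-1` A j) * \prod_(j <- J) P (X j @^-1` [set k j]).
Proof.
elim: L J k => [|l L IH] J k /= uJ pJ.
  rewrite big_nil mul1e -Xind //.
  by congr (P _); apply/seteqP; split => w /=; [case | move=> H; split].
case/andP: uJ => lLJ uLJ; case/andP: pJ => l0 pLJ.
move: (pLJ); rewrite all_cat => /andP[pL pJ].
set G := [set w | (forall j, j \in L -> A j (X j w)) /\ (forall j, j \in J -> X j w = k j)].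
have mG : measurable G.
  rewrite (_ : G = [set w | forall j, j\in L -> A j (X j w)] `&`
     [set w | forall j, j\in J -> [set k j] (X j w)]); last by apply/seteqP; split.
  by apply: measurableI; [apply: (@measAll _ A) | apply: (@measAll _ (fun j => [set k j]))].
rewrite [X in P X](_ : _ = G `&` X l @^-1` A l); last first.
  apply/seteqP; split => w /=.
    case=> HL HJ; split; [split|].
    - by move=> j jL; apply: HL; rewrite in_cons jL orbT.
    - exact: HJ.
    - by apply: HL; exact: mem_head.
  by case=> [[HL HJ] Hl]; split => // j; rewrite in_cons => /orP[/eqP ->|/HL].
rewrite decomp //.
set c := \prod_(j <- L) P (X j @^-1` A j) * \prod_(j <- J) P (X j @^-1` [set k j]).
have cfin : c \is a fin_num.
  have h1 : \prod_(j <- L) P (X j @^-1` A j) \is a fin_num.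
    rewrite big_seq_cond; apply: prode_fin_num => j /andP[jL _].
    by apply: Pfin; apply: measX; move/allP: pL => /(_ _ jL).
  have h2 : \prod_(j <- J) P (X j @^-1` [set k j]) \is a fin_num.
    rewrite big_seq_cond; apply: prode_fin_num => j /andP[jL _].
    by apply: Pfin; apply: measX; move/allP: pJ => /(_ _ jL).
  by rewrite fin_numM.
have step : forall n, P (G `&` X l @^-1` cz (A l) n) = (fine c)%:E * P (X l @^-1` cz (A l) n).
  move=> n; case: (cz_cases (A l) n) => [->|[z [_ [Az ->]]]].
    by rewrite !preimage_set0 setI0 measure0 mule0.
  have lJ : l \notin J by move: lLJ; rewrite mem_cat negb_or => /andP[].
  rewrite (_ : G `&` _ = [set w | (forall j, j \in L -> A j (X j w)) /\
     (forall j, j \in l :: J -> X j w = (fun j => if j == l then z else k j) j)]); last first.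
    apply/seteqP; split => w /=.
      case=> [[HL HJ] Hl]; split => // j; rewrite in_cons => /orP[/eqP ->|jJ].
        by rewrite eqxx.
      rewrite HJ //; case: eqP => // ejl; move: lJ; rewrite -ejl jJ //.
    case=> HL HJ; split; [split => // j jJ|].
      have := HJ j; rewrite in_cons jJ orbT => /(_ isT) ->.
      by case: eqP => // ejl; move: lJ; rewrite -ejl jJ.
    by have := HJ l; rewrite mem_head eqxx => /(_ isT).
  rewrite IH; last 2 first.
  - by rewrite -cat1s uniq_catCA cat1s /= lLJ uLJ.
  - by rewrite all_cat /= pL l0 pJ.
  rewrite big_cons eqxx fineK //.
  rewrite [\prod_(j <- J) _](eq_big_seq (fun j => P (X j @^-1` [set k j]))); last first.
    move=> j jJ /=; have njl : (j == l) = false.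
      by apply/negbTE; apply: contraNneq lJ => <-.
    by rewrite njl.
  by rewrite /c muleCA muleC.
rewrite (_ : limn _ = limn (fun m => \sum_(0 <= n < m) ((fine c)%:E * P (X l @^-1` cz (A l) n)))); last first.
  by apply/congr_lim/funext => m; apply: eq_bigr => n _; exact: step.
have := @nneseriesZl R (fun n => P (X l @^-1` cz (A l) n)) xpredT (fine c) 0%N.
move=> ->; last by move=> *; exact: measure_ge0.
rewrite -[X in _ * limn X = _](_ : (fun m => \sum_(0 <= n < m) P (setT `&` X l @^-1` cz (A l) n)) = _); last first.
  by apply/funext => m; apply: eq_bigr => n _; rewrite setTI.
rewrite -decomp // setTI fineK // big_cons /c.
by rewrite muleC muleA.
Qed.


Lemma ident_set j A : (0 < j)%N -> P (X j @^-1` A) = P (X 1%N @^-1` A).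
Proof.
move=> j0; rewrite -(setTI (X j @^-1` A)) -(setTI (X 1%N @^-1` A)) !decomp //.
apply/congr_lim/funext => m; apply: eq_bigr => n _; rewrite !setTI.
by case: (cz_cases A n) => [->|[z [_ [_ ->]]]]; rewrite ?preimage_set0 // Xid.
Qed.

Lemma big_in_seq (I : eqType) (s : seq I) (B : pred I) (F : I -> set T) w :
  (\big[setU/set0]_(i <- s | B i) F i) w -> exists2 i, (i \in s) && B i & F i w.
Proof.
elim: s => [|i s IH]; first by rewrite big_nil.
rewrite big_cons; case Bi: (B i); [case=> [Fi|/IH [j /andP[js Bj] Fj]] | move/IH => [j /andP[js Bj] Fj]].
- by exists i => //; rewrite mem_head Bi.
- by exists j => //; rewrite in_cons js orbT.
- by exists j => //; rewrite in_cons js orbT.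
Qed.

Lemma in_big (I : eqType) (s : seq I) (B : pred I) (F : I -> set T) w i :
  i \in s -> B i -> F i w -> (\big[setU/set0]_(j <- s | B j) F j) w.
Proof.
elim: s => [|j s IH] //; rewrite in_cons big_cons => /orP[/eqP <- -> Fi|iNs Bi Fi].
  by left.
by case: (B j); [right|]; apply: IH.
Qed.

Lemma P_big (I : eqType) (s : seq I) (B : pred I) (F : I -> set T) :
  uniq s -> (forall i, i \in s -> measurable (F i)) ->
  (forall i j, i \in s -> j \in s -> i != j -> F i `&` F j = set0) ->
  P (\big[setU/set0]_(i <- s | B i) F i) = \sum_(i <- s | B i) P (F i).
Proof.
elim: s => [|i s IH]; first by rewrite !big_nil measure0.
case/andP => iNs us mF dF.
have mF' : forall j, j \in s -> measurable (F j) by move=> j js; apply: mF; rewrite in_cons js orbT.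
have dF' : forall j j', j \in s -> j' \in s -> j != j' -> F j `&` F j' = set0.
  by move=> j j' js js'; apply: dF; rewrite in_cons ?js ?js' orbT.
rewrite !big_cons; case: (B i); last exact: IH.
rewrite measureU //; first by congr (_ + _); exact: IH.
- by apply: mF; exact: mem_head.
- by rewrite big_seq_cond; apply: bigsetU_measurable => j /andP[js _]; exact: mF'.
apply/seteqP; split => // w [Fi /big_in_seq [j /andP[js _] Fj]].
have : F i `&` F j = set0.
  by apply: dF; rewrite ?mem_head ?in_cons ?js ?orbT //; apply: contraNneq iNs => ->.
by move/seteqP => [+ _] => /(_ w) /=; apply.
Qed.

Local Close Scope ereal_scope.

Definition Pr (A : set T) : R := fine (P A).

Lemma PrE A : measurable A -> P A = (Pr A)%:E.
Proof. by move=> mA; rewrite /Pr fineK // Pfin. Qed.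

Lemma Pr_ge0 A : 0 <= Pr A.
Proof. by rewrite /Pr fine_ge0 // measure_ge0. Qed.

Lemma Pr_big (I : finType) (B : pred I) (F : I -> set T) :
  (forall i, measurable (F i)) ->
  (forall i j, i != j -> F i `&` F j = set0) ->
  Pr (\big[setU/set0]_(i | B i) F i) = \sum_(i | B i) Pr (F i).
Proof.
move=> mF dF; rewrite /Pr P_big //; [|exact: index_enum_uniq|by move=> *; apply: dF].
rewrite (eq_bigr (fun i => (Pr (F i))%:E)); last by move=> i _; rewrite PrE.
by rewrite sumEFin.
Qed.

Lemma Pr_bigs (I : eqType) (s : seq I) (F : I -> set T) :
  uniq s -> (forall i, i \in s -> measurable (F i)) ->
  (forall i j, i \in s -> j \in s -> i != j -> F i `&` F j = set0) ->
  Pr (\big[setU/set0]_(i <- s) F i) = \sum_(i <- s) Pr (F i).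
Proof.
move=> us mF dF; rewrite /Pr P_big //.
rewrite big_seq (eq_bigr (fun i => (Pr (F i))%:E)); last by move=> i is'; rewrite PrE //; exact: mF.
by rewrite sumEFin -big_seq.
Qed.

Lemma Pr_setT : Pr setT = 1.
Proof. by rewrite /Pr probability_setT. Qed.

Lemma fine_prod (I : eqType) (s : seq I) (f : I -> \bar R) :
  (forall i, i \in s -> f i \is a fin_num) -> fine (\prod_(i <- s) f i)%E = \prod_(i <- s) fine (f i).
Proof.
elim: s => [|i s IH] ff; first by rewrite !big_nil.
have ff' : forall j, j \in s -> f j \is a fin_num.
  by move=> j js; apply: ff; rewrite in_cons js orbT.
have h1 : f i \is a fin_num by apply: ff; exact: mem_head.
have h2 : (\prod_(j <- s) f j)%E \is a fin_num.
  by rewrite big_seq; apply: prode_fin_num => j js; exact: ff'.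
by rewrite !big_cons fineM // IH.
Qed.

Section Res.
Context (N : nat) (N0 : (0 < N)%N).

Lemma resid_lt (z : int) : (absz (z %% N%:Z)%Z < N)%N.
Proof.
have h0 : (0 <= (z %% N%:Z)%Z) by apply: modz_ge0; rewrite eqz_nat -lt0n.
have h1 : ((z %% N%:Z)%Z < N%:Z) by apply: ltz_pmod; rewrite ltz_nat.
by rewrite -ltz_nat gez0_abs.
Qed.

Definition resid (z : int) : 'I_N := Ordinal (resid_lt z).

Lemma residE z : (resid z : nat)%:Z = (z %% N%:Z)%Z.
Proof.
by rewrite /= gez0_abs //; apply: modz_ge0; rewrite eqz_nat -lt0n.
Qed.

Definition rho j w := resid (X j w).
Definition p (t : 'I_N) := Pr [set w | rho 1 w = t].

Lemma rho_point (J : seq nat) (t : nat -> 'I_N) : uniq J -> all (fun j => 0 < j)%N J ->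
  Pr [set w | forall j, j \in J -> rho j w = t j] = \prod_(j <- J) p (t j).
Proof.
move=> uJ pJ.
have := @indep_sets J [::] (fun j => [set z | resid z = t j]) (fun _ => 0).
rewrite cats0 => /(_ uJ pJ); rewrite big_nil mule1 => H.
rewrite /Pr (_ : [set w | _] = [set w | (forall j, j \in J -> [set z | resid z = t j] (X j w))
   /\ (forall j, j \in [::] -> X j w = 0)]); last first.
  by apply/seteqP; split => w /=; [move=> H1; split | case].
rewrite H fine_prod; last first.
  move=> j jJ; apply: Pfin; apply: measX.
  by move/allP: pJ => /(_ _ jJ).
apply: eq_big_seq => j jJ; rewrite ident_set //.
by move/allP: pJ => /(_ _ jJ).
Qed.


Definition vec a m w : {ffun 'I_m -> 'I_N} := [ffun i : 'I_m => rho (a + i.+1)%N w].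
Definition pi m (r : {ffun 'I_m -> 'I_N}) : R := \prod_(i < m) p (r i).
Definition dflt : 'I_N := Ordinal N0.
Definition ext m (r : {ffun 'I_m -> 'I_N}) (i : nat) : 'I_N :=
  if insub i is Some o then r o else dflt.
Arguments ext {m}.
Arguments pi {m}.

Lemma extE m r (i : 'I_m) : ext r i = r i.
Proof. by rewrite /ext valK. Qed.

Definition tt a m k (r1 : {ffun 'I_m -> 'I_N}) (r2 : {ffun 'I_k -> 'I_N}) j :=
  if (j < a.+1 + m)%N then ext r1 (j - a.+1)%N else ext r2 (j - (a.+1 + m))%N.
Arguments tt a {m k}.

Definition cell a m k (rr : {ffun 'I_m -> 'I_N} * {ffun 'I_k -> 'I_N}) :=
  [set w | vec a m w = rr.1 /\ vec (a + m)%N k w = rr.2].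

Lemma cellE a m k rr : cell a m k rr =
  [set w | forall j, j \in iota a.+1 (m + k)%N -> rho j w = tt a rr.1 rr.2 j].
Proof.
apply/seteqP; split => w /=.
  case=> [e1 e2] j; rewrite mem_iota => /andP[j1 j2]; rewrite /tt; case: ltnP => hj.
    have hi : (j - a.+1 < m)%N by lia.
    rewrite -[(j - a.+1)%N]/(nat_of_ord (Ordinal hi)) extE -e1 ffunE /=; congr rho; lia.
  have hi : (j - (a.+1 + m) < k)%N by lia.
  rewrite -[(j - (a.+1 + m))%N]/(nat_of_ord (Ordinal hi)) extE -e2 ffunE /=; congr rho; lia.
move=> H; split; apply/ffunP => i; have hi := ltn_ord i; rewrite ffunE H.
- rewrite /tt ifT; last by lia.
  by rewrite (_ : (a + i.+1 - a.+1 = i)%N) ?extE //; lia.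
- by rewrite mem_iota; apply/andP; split; lia.
- rewrite /tt ifF; last by lia.
  by rewrite (_ : (a + m + i.+1 - (a.+1 + m) = i)%N) ?extE //; lia.
- by rewrite mem_iota; apply/andP; split; lia.
Qed.

Lemma cell_meas a m k rr : measurable (cell a m k rr).
Proof.
rewrite cellE; apply: (@measAll _ (fun j => [set z | resid z = tt a rr.1 rr.2 j])).
by apply/allP => j; rewrite mem_iota => /andP[+ _]; apply: leq_trans.
Qed.

Lemma Pr_cell a m k rr : Pr (cell a m k rr) = pi rr.1 * pi rr.2.
Proof.
rewrite cellE rho_point; last 2 first.
- exact: iota_uniq.
- by apply/allP => j; rewrite mem_iota => /andP[+ _]; apply: leq_trans.
rewrite iotaD big_cat /=; congr (_ * _).
  rewrite -[a.+1]addn0 iotaDl big_map (_ : iota 0 m = index_iota 0 m); last by rewrite /index_iota subn0.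
  rewrite big_mkord; apply: eq_bigr => i _; have hi := ltn_ord i; rewrite /tt ifT; last by lia.
  by rewrite ?addn0 addKn extE.
rewrite -[(a.+1 + m)%N]addn0 iotaDl big_map (_ : iota 0 k = index_iota 0 k); last by rewrite /index_iota subn0.
rewrite big_mkord; apply: eq_bigr => i _; have hi := ltn_ord i; rewrite /tt ifF; last by lia.
by rewrite ?addn0 addKn extE.
Qed.

Lemma law_set a m k (f1 : pred {ffun 'I_m -> 'I_N}) (f2 : pred {ffun 'I_k -> 'I_N}) :
  [set w | f1 (vec a m w) && f2 (vec (a + m)%N k w)] =
  \big[setU/set0]_(rr | f1 rr.1 && f2 rr.2) cell a m k rr.
Proof.
apply/seteqP; split => w /=.
  move=> H; apply: (@in_big _ _ _ _ _ (vec a m w, vec (a + m)%N k w)) => //.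
  exact: mem_index_enum.
by case/big_in_seq => rr /andP[_ Hrr] [-> ->].
Qed.

Lemma law_meas a m k (f1 : pred {ffun 'I_m -> 'I_N}) (f2 : pred {ffun 'I_k -> 'I_N}) :
  measurable [set w | f1 (vec a m w) && f2 (vec (a + m)%N k w)].
Proof. by rewrite law_set; apply: bigsetU_measurable => rr _; exact: cell_meas. Qed.

Lemma law2 a m k (f1 : pred {ffun 'I_m -> 'I_N}) (f2 : pred {ffun 'I_k -> 'I_N}) :
  Pr [set w | f1 (vec a m w) && f2 (vec (a + m)%N k w)] =
  (\sum_(r | f1 r) pi r) * (\sum_(r | f2 r) pi r).
Proof.
rewrite law_set Pr_big; last 2 first.
- by move=> rr; exact: cell_meas.
- move=> [r1 r2] [s1 s2] ne; apply/seteqP; split => // w [[/= e1 e2] [/= e3 e4]].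
  by move: ne; rewrite -e1 -e2 -e3 -e4 eqxx.
rewrite (eq_bigr (fun rr => pi rr.1 * pi rr.2)); last by move=> rr _; exact: Pr_cell.
rewrite [RHS]big_distrl /=.
under [RHS]eq_bigr => r1 _ do rewrite big_distrr /=.
by rewrite pair_big_dep.
Qed.


Definition psum m (r : {ffun 'I_m -> 'I_N}) (j : nat) : int :=
  \sum_(i < m | (i < j)%N) (r i : nat)%:Z.
Arguments psum {m}.
Definition hitr (x : nat) m (r : {ffun 'I_m -> 'I_N}) (j : nat) : bool :=
  ((x%:Z + psum r j) %% N%:Z)%Z == 0.
Arguments hitr x {m}.
Definition hit (x n : nat) w : bool := ((x%:Z + S X n w) %% N%:Z)%Z == 0.

Lemma modz_sum (I : Type) (s : seq I) (f : I -> int) :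
  ((\sum_(i <- s) f i) %% N%:Z = (\sum_(i <- s) (f i %% N%:Z)%Z) %% N%:Z)%Z.
Proof.
elim: s => [|i s IH]; first by rewrite !big_nil.
by rewrite !big_cons -modzDml -modzDmr IH modzDmr.
Qed.

Lemma psum_vec a m w j : (j <= m)%N ->
  (psum (vec a m w) j %% N%:Z = (\sum_(i < j) X (a + i.+1)%N w) %% N%:Z)%Z.
Proof.
move=> jm; rewrite /psum.
rewrite (eq_bigr (fun i : 'I_m => (rho (a + i.+1)%N w : nat)%:Z)); last by move=> i _; rewrite ffunE.
rewrite -(big_ord_widen _ (fun i => (rho (a + i.+1)%N w : nat)%:Z) jm).
rewrite [RHS]modz_sum; congr (_ %% _)%Z; apply: eq_bigr => i _.
by rewrite residE.
Qed.

Lemma S_ord n w : S X n w = \sum_(i < n) X i.+1 w.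
Proof.
rewrite /S -[1%N]add0n big_addn subn1 /= big_mkord.
by apply: eq_bigr => i _; rewrite addn1.
Qed.

Lemma S_split m k w : S X (m + k) w = S X m w + \sum_(i < k) X (m + i.+1)%N w.
Proof.
rewrite !S_ord big_split_ord /=; congr (_ + _).
by apply: eq_bigr => i _; rewrite addnS.
Qed.

Lemma hitE x m w j : (j <= m)%N -> hitr x (vec 0 m w) j = hit x j w.
Proof.
move=> jm; rewrite /hitr /hit -modzDmr psum_vec // modzDmr S_ord.
by congr ((_ + _) %% _ == 0)%Z; apply: eq_bigr => i _; rewrite add0n.
Qed.

Lemma hit2E x m k w : hit x m w -> hitr 0 (vec m k w) k = hit x (m + k) w.
Proof.
rewrite /hitr /hit => /eqP h; rewrite add0r psum_vec // S_split addrA.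
by rewrite -modzDml h add0r.
Qed.

Definition Fp x m (r : {ffun 'I_m -> 'I_N}) : bool :=
  hitr x r m && [forall i : 'I_m, (0 < i)%N ==> ~~ hitr x r i].
Arguments Fp x {m}.
Definition Fset x m := [set w | Fp x (vec 0 m w) && xpredT (vec (0 + m)%N 0 w)].
Definition FAset x m k := [set w | Fp x (vec 0 m w) && hitr 0 (vec (0 + m)%N k w) k].
Definition Qset k := [set w | xpredT (vec 0 0 w) && hitr 0 (vec (0 + 0)%N k w) k].
Definition Aset x n := [set w | hitr x (vec 0 n w) n && xpredT (vec (0 + n)%N 0 w)].

Lemma FsetE x m w : Fset x m w <-> (hit x m w /\ forall j, (0 < j < m)%N -> ~~ hit x j w).
Proof.
rewrite /Fset /Fp /= andbT hitE //; split.
  case/andP => -> /forallP H; split => // j /andP[j0 jm].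
  by have := H (Ordinal jm); rewrite /= j0 /= hitE //; exact: ltnW.
case=> -> H; apply/forallP => i; apply/implyP => i0.
rewrite hitE; last exact: ltnW (ltn_ord i).
by apply: H; rewrite i0 ltn_ord.
Qed.

Lemma FAsetE x m k w : FAset x m k w <-> (Fset x m w /\ hit x (m + k) w).
Proof.
rewrite /FAset /Fset /= andbT add0n; split.
  case/andP => Fw h2.
  have Fs : Fset x m w by rewrite /Fset /= Fw.
  split => //; have [hm _] := (FsetE x m w).1 Fs.
  by rewrite -hit2E.
case=> Fw h2; rewrite Fw /=.
have := (FsetE x m w).1; rewrite /Fset /= Fw => /(_ isT) [hm _].
by rewrite (@hit2E x m k w hm).
Qed.

Lemma AsetE x n w : Aset x n w <-> hit x n w.
Proof. by rewrite /Aset /= andbT hitE. Qed.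

Lemma QsetE k : Qset k = [set w | S X k w \in cls 0 N].
Proof.
apply/seteqP; split => w; rewrite /Qset /= add0n hitE // /hit add0r in_setE /cls /=.
  by move/eqP/dvdz_mod0P/dvdzP => [q ->]; exists q; rewrite add0r.
by case=> q ->; apply/eqP/dvdz_mod0P/dvdzP; exists q; rewrite add0r.
Qed.

Lemma sum0 : \sum_(r : {ffun 'I_0 -> 'I_N}) pi r = 1.
Proof.
rewrite (eq_bigr (fun _ => 1)); last by move=> r _; rewrite /pi big_ord0.
by rewrite sumr_const card_ffun card_ord card_ord expn0.
Qed.

Lemma Pr_FA x m k : Pr (FAset x m k) = Pr (Fset x m) * Pr (Qset k).
Proof.
rewrite /FAset /Fset /Qset (law2 0 m k (Fp x) (fun r => hitr 0 r k)).
rewrite (law2 0 m 0 (Fp x) xpredT) (law2 0 0 k xpredT (fun r => hitr 0 r k)).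
by rewrite sum0 mulr1 mul1r.
Qed.

Lemma Fdisj x m m' w : (0 < m)%N -> (m < m')%N -> Fset x m w -> Fset x m' w -> False.
Proof.
move=> m0 mm' /FsetE [hm _] /FsetE [_ H].
by have := H m; rewrite m0 mm' hm => /(_ isT).
Qed.

Lemma first_hit x n w : (0 < n)%N -> hit x n w -> exists m, (0 < m <= n)%N /\ Fset x m w.
Proof.
move=> n0 hn.
have ex : exists j, (0 < j)%N && hit x j w by exists n; rewrite n0 hn.
case: (ex_minnP ex) => m /andP[m0 hm] mmin.
exists m; split; first by rewrite m0 mmin // n0 hn.
apply/FsetE; split => // j /andP[j0 jm]; apply/negP => hj.
by have := mmin j; rewrite j0 hj => /(_ isT); rewrite leqNgt jm.
Qed.

Lemma Fset_meas x m : measurable (Fset x m).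
Proof. exact: (law_meas 0 m 0 (Fp x) xpredT). Qed.

Lemma FAset_meas x m k : measurable (FAset x m k).
Proof. exact: (law_meas 0 m k (Fp x) (fun r => hitr 0 r k)). Qed.

Lemma Aset_meas x n : measurable (Aset x n).
Proof. exact: (law_meas 0 n 0 (fun r => hitr x r n) xpredT). Qed.

Lemma Fdisj_seq x (s : seq nat) (G : nat -> set T) : all (fun j => 0 < j)%N s ->
  (forall m, m \in s -> G m `<=` Fset x m) ->
  forall i j, i \in s -> j \in s -> i != j -> G i `&` G j = set0.
Proof.
move=> ps sub i j is' js ij; apply/seteqP; split => // w [Gi Gj].
have Fi := sub i is' w Gi; have Fj := sub j js w Gj.
have i0 := allP ps i is'; have j0 := allP ps j js.
case: (ltngtP i j) => [lt|lt|e]; last by move: ij; rewrite e eqxx.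
  exact: (@Fdisj x i j w i0 lt Fi Fj).
exact: (@Fdisj x j i w j0 lt Fj Fi).
Qed.

Lemma Pr_Adecomp x n : (0 < n)%N ->
  Pr (Aset x n) = \sum_(m <- iota 1 n) Pr (FAset x m (n - m)).
Proof.
move=> n0.
have pos : all (fun j => 0 < j)%N (iota 1 n) by apply/allP => j; rewrite mem_iota => /andP[].
rewrite -Pr_bigs; last 3 first.
- exact: iota_uniq.
- by move=> m _; exact: FAset_meas.
- by apply: (@Fdisj_seq x) => // m _ w /FAsetE [].
congr Pr; apply/seteqP; split => w.
  move/AsetE => hn; have [m [/andP[m0 mn] Fm]] := @first_hit x n w n0 hn.
  apply: (@in_big _ (iota 1 n) xpredT (fun i => FAset x i (n - i)) w m) => //.
    by rewrite mem_iota m0 add1n ltnS.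
  by apply/FAsetE; split => //; rewrite subnKC.
case/big_in_seq => m /andP[]; rewrite mem_iota => /andP[m0 mn] _ /FAsetE [_].
have mn' : (m <= n)%N by rewrite -ltnS -(add1n n).
by rewrite subnKC // => h; apply/AsetE.
Qed.

Lemma Pr_E x : Pr [set w | exists n, (1 <= n <= N)%N /\ hit x n w] =
  \sum_(m <- iota 1 N) Pr (Fset x m).
Proof.
have pos : all (fun j => 0 < j)%N (iota 1 N) by apply/allP => j; rewrite mem_iota => /andP[].
rewrite -Pr_bigs; last 3 first.
- exact: iota_uniq.
- by move=> m _; exact: Fset_meas.
- by apply: (@Fdisj_seq x) => // m _ w h.
congr Pr; apply/seteqP; split => w.
  move=> [n [/andP[n1 nN] hn]]; have [m [/andP[m0 mn] Fm]] := @first_hit x n w n1 hn.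
  apply: (@in_big _ (iota 1 N) xpredT (fun i => Fset x i) w m) => //.
  by rewrite mem_iota m0 add1n ltnS (leq_trans mn nN).
case/big_in_seq => m /andP[]; rewrite mem_iota => /andP[m0 mN] _ /FsetE [hm _].
by exists m; rewrite m0 -ltnS -(add1n N) mN.
Qed.

Lemma Pr_part n : \sum_(x < N) Pr (Aset x n) = 1.
Proof.
rewrite -Pr_setT -(@Pr_big 'I_N xpredT (fun x : 'I_N => Aset x n)); last 2 first.
- by move=> x; exact: Aset_meas.
- move=> x y xy; apply/seteqP; split => // w [/AsetE hx /AsetE hy]; move: xy.
  move: hx hy; rewrite /hit => /eqP hx /eqP hy.
  have : ((x%:Z + S X n w) == (y%:Z + S X n w) %[mod N%:Z])%Z by rewrite hx hy.
  rewrite eqz_modDr !modz_small; last 2 first.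
  - by rewrite ltz_nat ltn_ord andbT.
  - by rewrite ltz_nat ltn_ord andbT.
  by move/eqP => /eqP; rewrite eqz_nat => /eqP/ord_inj ->; rewrite eqxx.
congr Pr; apply/seteqP; split => // w _.
apply: (@in_big _ _ xpredT (fun x : 'I_N => Aset x n) w (resid (- S X n w))) => //.
  exact: mem_index_enum.
apply/AsetE; rewrite /hit residE modzDml addNr.
by rewrite mod0z.
Qed.

End Res.

End Prob.

Section Alg.
Context (R : realType).

Lemma iotaS1 m n : iota m n.+1 = iota m n ++ [:: (m + n)%N].
Proof. by rewrite -addn1 iotaD. Qed.

Lemma sum_iotaSm (F : nat -> R) m k :
  \sum_(i <- iota m k.+1) F i = \sum_(i <- iota m k) F i + F (m + k)%N.
Proof. by rewrite iotaS1 big_cat big_seq1. Qed.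

Lemma sum_iotaS (F : nat -> R) k :
  \sum_(i <- iota 0 k.+1) F i = \sum_(i <- iota 0 k) F i + F k.
Proof. by rewrite sum_iotaSm add0n. Qed.

Lemma tri_sum (M : nat) (g : nat -> nat -> R) :
  \sum_(n <- iota 1 M) \sum_(m <- iota 1 n) g m (n - m)%N =
  \sum_(m <- iota 1 M) \sum_(i <- iota 0 (M - m).+1) g m i.
Proof.
elim: M => [|M IH]; first by rewrite !big_nil.
rewrite sum_iotaSm IH add1n sum_iotaSm add1n [in RHS]sum_iotaSm add1n subnn sum_iotaS big_nil add0r.
rewrite addrA; congr (_ + _).
rewrite -big_split big_seq [RHS]big_seq; apply: eq_bigr => m.
rewrite mem_iota => /andP[m1 mM].
rewrite subSn; last by lia.
by rewrite [RHS]sum_iotaS.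
Qed.

Lemma pre_le (q : nat -> R) k l : (forall i, 0 <= q i) -> (k <= l)%N ->
  \sum_(i <- iota 0 k) q i <= \sum_(i <- iota 0 l) q i.
Proof.
move=> q0 kl; rewrite -(subnKC kl) iotaD big_cat /= lerDl.
by apply: sumr_ge0 => i _.
Qed.

Lemma sum_one M : \sum_(n <- iota 1 M) (1 : R) = M%:R.
Proof.
elim: M => [|M IH]; first by rewrite big_nil.
by rewrite sum_iotaSm IH -natr1.
Qed.

Lemma algebra (N : nat) (f : 'I_N -> nat -> R) (q : nat -> R) :
  (0 < N)%N -> q 0%N = 1 -> (forall i, 0 <= q i) -> (forall x m, 0 <= f x m) ->
  (forall n, (0 < n)%N -> \sum_(x < N) \sum_(m <- iota 1 n) f x m * q (n - m)%N = 1) ->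
  N%:R <= (1 + \sum_(1 <= i < N) q i) * \sum_(x < N) \sum_(m <- iota 1 N) f x m /\
  (1 + \sum_(1 <= i < N) q i) * \sum_(x < N) \sum_(m <- iota 1 N) f x m <= 2 * N%:R.
Proof.
move=> N0 q0 qge0 fge0 H.
have key M : M%:R = \sum_(x < N) \sum_(m <- iota 1 M) f x m * \sum_(i <- iota 0 (M - m).+1) q i.
  rewrite -sum_one big_seq (eq_bigr (fun n => \sum_(x < N) \sum_(m <- iota 1 n) f x m * q (n - m)%N)); last first.
    by move=> n; rewrite mem_iota => /andP[n1 _]; rewrite H.
  rewrite -big_seq exchange_big /=; apply: eq_bigr => x _.
  rewrite (tri_sum M (fun m i => f x m * q i)).
  by apply: eq_bigr => m _; rewrite big_distrr.
have sE : 1 + \sum_(1 <= i < N) q i = \sum_(i <- iota 0 N) q i.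
  rewrite -(prednK N0) (_ : iota 0 N.-1.+1 = 0%N :: iota 1 N.-1) // big_cons q0.
  by rewrite /index_iota subn1.
rewrite sE; split.
  rewrite key mulrC big_distrl /=; apply: ler_sum => x _.
  rewrite big_distrl /= big_seq [X in _ <= X]big_seq; apply: ler_sum => m.
  rewrite mem_iota => /andP[m1 mN].
  apply: ler_wpM2l => //; change (\sum_(i <- iota 0 (N - m).+1) q i <= \sum_(i <- iota 0 N) q i); apply: pre_le => //; lia.
have e2 : (2 * N = N + N)%N by lia.
rewrite -natrM key mulrC big_distrl /=; apply: ler_sum => x _.
rewrite e2 iotaD big_cat /= -[X in X <= _]addr0; apply: lerD; last first.
  by apply: sumr_ge0 => m _; apply: mulr_ge0 => //; apply: sumr_ge0.
rewrite big_distrl /= big_seq [X in _ <= X]big_seq; apply: ler_sum => m.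
rewrite mem_iota => /andP[m1 mN].
apply: ler_wpM2l => //; change (\sum_(i <- iota 0 N) q i <= \sum_(i <- iota 0 (N + N - m).+1) q i); apply: pre_le => //; lia.
Qed.

End Alg.


Arguments Pr {d T R} P A.
Arguments Fset {d T} X {N} N0 x m.
Arguments Qset {d T} X {N} N0 k.
Arguments QsetE {d T} X {N} N0 k.
Arguments Pr_part {d T R} P {X} Xm {N} N0 n.
Arguments Pr_Adecomp {d T R} P {X} Xm {N} N0 x n _.
Arguments Pr_FA {d T R} P {X} Xm Xid Xind {N} N0 x m k.
Arguments Pr_E {d T R} P {X} Xm {N} N0 x.
Arguments Pr_setT {d T R} P.
Arguments Pr_ge0 {d T R} P A.

Theorem corollary2 (d : measure_display) (T : measurableType d) (R : realType)
  (P : probability T R) (X : nat -> T -> int) (N : nat) :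
  iid P X -> (2 <= N)%N ->
  let s := \sum_(1 <= i < N) fine (P [set w | S X i w \in cls 0 N]) in
  let E := [set xw : nat * T | exists n : nat, (1 <= n <= N)%N /\ Rw X N n xw = 0] in
  (1 + s)^-1 <= PR P N E <= 2 / (1 + s).
Proof.
move=> [Xm Xid Xind] N2; cbv zeta.
set s := \sum_(1 <= i < N) _.
set E := [set xw : nat * T | _].
have N0 : (0 < N)%N := ltnW N2.
pose f := fun (x : 'I_N) m => Pr P (Fset X N0 x m).
pose q := fun k => Pr P (Qset X N0 k).
have hq0 : q 0%N = 1.
  rewrite /q QsetE (_ : [set w | _] = setT); first exact: Pr_setT P.
  apply/seteqP; split => // w _; rewrite /= in_setE /S big_geq //.
  by exists 0; rewrite mul0r addr0.
have H n : (0 < n)%N -> \sum_(x < N) \sum_(m <- iota 1 n) f x m * q (n - m)%N = 1.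
  move=> n0; rewrite -(Pr_part P Xm N0 n); apply: eq_bigr => x _.
  rewrite (Pr_Adecomp P Xm N0 x n n0); apply: eq_bigr => m _.
  by rewrite (Pr_FA P Xm Xid Xind N0).
have alg := @algebra R N f q N0 hq0 (fun i => Pr_ge0 P _) (fun x m => Pr_ge0 P _) H.
have sE : s = \sum_(1 <= i < N) q i.
  by rewrite /s; apply: eq_bigr => i _; rewrite /q QsetE.
have PRE : PR P N E = N%:R^-1 * \sum_(x < N) \sum_(m <- iota 1 N) f x m.
  rewrite /PR; congr (_ * _); apply: eq_bigr => x _.
  rewrite -(Pr_E P Xm N0 x); congr (fine (P _)); apply/seteqP; split => w /=.
    by move=> [n [nN h]]; exists n; split => //; apply/eqP.
  by move=> [n [nN h]]; exists n; split => //; apply/eqP.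
rewrite -sE in alg; rewrite PRE.
move: alg; set e := \sum_(x < N) _; case=> lo hi.
have s0 : 0 <= s by rewrite sE; apply: sumr_ge0 => i _; exact: Pr_ge0 P _.
have Npos : 0 < N%:R :> R by rewrite ltr0n.
have s1 : 0 < 1 + s by lra.
have Nn0 : N%:R != 0 :> R by rewrite gt_eqF.
have sn0 : 1 + s != 0 by rewrite gt_eqF.
apply/andP; split.
  rewrite -subr_ge0 (_ : N%:R^-1 * e - (1 + s)^-1 = N%:R^-1 * (1 + s)^-1 * ((1 + s) * e - N%:R)); last by field; rewrite sn0 Nn0.
  by apply: mulr_ge0; [apply: mulr_ge0; rewrite invr_ge0; lra | lra].
rewrite -subr_ge0 (_ : 2 / (1 + s) - N%:R^-1 * e = N%:R^-1 * (1 + s)^-1 * (2 * N%:R - (1 + s) * e)); last by field; rewrite sn0 Nn0.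
by apply: mulr_ge0; [apply: mulr_ge0; rewrite invr_ge0; lra | lra].
Qed.
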